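(* Let $n\ge2$ be an integer, $\sigma\ge0$, $R'>0$, and define $a_1=\frac{n}{2R'}$, $a_2=\frac{a_1}{n-1}$, $a_k=\min\big\{(1+\frac1{n-1})a_{k-1},\frac{\sqrt{n(n+\sigma A_{k-1})}}{2R'}\big\}$ for $k\ge3$, where $A_k=\sum_{i=1}^ka_i$. Then for all $k\ge1$, $$A_k\ge\max\Big\{\frac{n-1}{2R'}\Big(1+\frac1{n-1}\Big)^k\mathbb{1}_{k\le k_0},\ \frac{(n-1)^2\sigma}{(4R')^2n}(k-k_0+n-1)^2\mathbb{1}_{k\ge k_0},\ \frac{n(k-K_0+n-1)}{2R'}\mathbb{1}_{k\ge K_0}\Big\},$$ where $\mathbb{1}$ denotes the indicator function, $K_0=\big\lceil\frac{\log n}{\log n-\log(n-1)}\big\rceil$, $k_0=\big\lceil\frac{\log B_{n,\sigma,R'}}{\log n-\log(n-1)}\big\rceil$, and $$B_{n,\sigma,R'}=\frac{\sigma n(n-1)}{4R'}\Big[1+\sqrt{1+\Big(\frac{4R'}{\sigma(n-1)}\Big)^2}\Big]\ge n\max\Big\{1,\frac{\sigma(n-1)}{2R'}\Big\}.$$ *)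

(* Defs.v *)
From Stdlib Require Import Reals ZArith.
Open Scope R_scope.

(* Ceiling of a real number: ceil x = - floor (- x), floor y = up y - 1. *)
Definition Rceil (x : R) : Z := (1 - up (- x))%Z.

(* aA n s R' k = (a_k, A_k), with A_0 = 0 and a_0 = 0 (unused). *)
Fixpoint aA (n : nat) (s R' : R) (k : nat) : R * R :=
  match k with
  | O => (0, 0)
  | S k' =>
      let (ap, Ap) := aA n s R' k' in
      let ak :=
        match k' with
        | O => INR n / (2 * R')
        | S O => ap / (INR n - 1)
        | _ => Rmin ((1 + 1 / (INR n - 1)) * ap)
                    (sqrt (INR n * (INR n + s * Ap)) / (2 * R'))
        end in
      (ak, Ap + ak)
  end.

Definition seq_a (n : nat) (s R' : R) (k : nat) : R := fst (aA n s R' k).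
Definition seq_A (n : nat) (s R' : R) (k : nat) : R := snd (aA n s R' k).

(* B_{n,sigma,R'} = sigma n (n-1)/(4R') [1 + sqrt(1 + (4R'/(sigma(n-1)))^2)],
   written as n(n-1)/(4R') [sigma + sqrt(sigma^2 + (4R'/(n-1))^2)], which is
   algebraically identical for sigma > 0 and is the continuous extension
   at sigma = 0. *)
Definition Bconst (n : nat) (s R' : R) : R :=
  INR n * (INR n - 1) / (4 * R') *
    (s + sqrt (s ^ 2 + (4 * R' / (INR n - 1)) ^ 2)).

Definition K0 (n : nat) : Z := Rceil (ln (INR n) / (ln (INR n) - ln (INR n - 1))).
Definition k0 (n : nat) (s R' : R) : Z :=
  Rceil (ln (Bconst n s R') / (ln (INR n) - ln (INR n - 1))).

Definition indic (b : bool) : R := if b then 1 else 0.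

(* Main.v *)
Require Import Defs.
From Stdlib Require Import Reals ZArith Lra Lia.
Open Scope R_scope.

Lemma ceil_spec y : IZR (Rceil y) - 1 < y <= IZR (Rceil y).
Proof.
  unfold Rceil. destruct (archimed (- y)) as [H1 H2].
  rewrite minus_IZR. simpl. lra.
Qed.

Lemma lnq_pos q : 1 < q -> 0 < ln q.
Proof. intros; rewrite <- ln_1; apply ln_increasing; lra. Qed.

Lemma ceil_lt q X j : 1 < q -> 0 < X ->
  (Z.of_nat (S j) <= Rceil (ln X / ln q))%Z -> q ^ j < X.
Proof.
  intros Hq HX Hk.
  pose proof (ceil_spec (ln X / ln q)) as [C1 C2].
  apply IZR_le in Hk. rewrite <- INR_IZR_INZ, S_INR in Hk.
  pose proof (lnq_pos q Hq).
  assert (INR j < ln X / ln q) by lra.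
  assert (INR j * ln q < ln X).
  { apply (Rmult_lt_compat_r (ln q)) in H0; auto.
    unfold Rdiv in H0. rewrite Rmult_assoc, Rinv_l in H0; lra. }
  apply ln_lt_inv; auto. apply pow_lt; lra. rewrite ln_pow; lra.
Qed.

Lemma ceil_ge q X k : 1 < q -> 0 < X ->
  (Rceil (ln X / ln q) <= Z.of_nat k)%Z -> X <= q ^ k.
Proof.
  intros Hq HX Hk.
  pose proof (ceil_spec (ln X / ln q)) as [C1 C2].
  apply IZR_le in Hk. rewrite <- INR_IZR_INZ in Hk.
  pose proof (lnq_pos q Hq).
  assert (ln X / ln q <= INR k) by lra.
  assert (ln X <= INR k * ln q).
  { apply (Rmult_le_compat_r (ln q)) in H0; [|lra].
    unfold Rdiv in H0. rewrite Rmult_assoc, Rinv_l in H0; lra. }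
  destruct (Rle_lt_dec X (q ^ k)) as [|Hc]; auto.
  apply ln_increasing in Hc; [|apply pow_lt; lra]. rewrite ln_pow in Hc; lra.
Qed.

Lemma ceil_ge1 q X : 1 < q -> q <= X -> (1 <= Rceil (ln X / ln q))%Z.
Proof.
  intros Hq HX. pose proof (ceil_spec (ln X / ln q)) as [C1 C2].
  pose proof (lnq_pos q Hq).
  assert (ln q <= ln X).
  { destruct (Req_dec q X); [subst; lra|]. left; apply ln_increasing; lra. }
  assert (1 <= ln X / ln q).
  { apply (Rmult_le_reg_r (ln q)); auto. unfold Rdiv. rewrite Rmult_assoc, Rinv_l; lra. }
  apply le_IZR. simpl. lra.
Qed.

Lemma sqrt_ge x y : 0 <= x -> x * x <= y -> x <= sqrt y.
Proof. intros. rewrite <- (sqrt_square x) by auto. apply sqrt_le_1_alt; auto. Qed.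

Section S.
Variables (n : nat) (s R' : R).

Lemma A_S k : seq_A n s R' (S k) = seq_A n s R' k + seq_a n s R' (S k).
Proof. unfold seq_A, seq_a; simpl. destruct (aA n s R' k); reflexivity. Qed.

Lemma a_1 : seq_a n s R' 1 = INR n / (2 * R').
Proof. reflexivity. Qed.

Lemma a_2 : seq_a n s R' 2 = seq_a n s R' 1 / (INR n - 1).
Proof. reflexivity. Qed.

Lemma A_1 : seq_A n s R' 1 = INR n / (2 * R').
Proof. unfold seq_A; simpl. ring. Qed.

Lemma a_SSS k : seq_a n s R' (S (S (S k))) =
  Rmin ((1 + 1 / (INR n - 1)) * seq_a n s R' (S (S k)))
       (sqrt (INR n * (INR n + s * seq_A n s R' (S (S k)))) / (2 * R')).
Proof. unfold seq_A, seq_a. remember (S (S k)) as m. simpl. subst m.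
  destruct (aA n s R' (S (S k))); reflexivity. Qed.
End S.

Lemma quad K r s u x : 0 < K -> 0 < r -> 0 <= s -> u * u = s * s + r * r -> 0 <= u ->
  0 <= x -> x <= K * (s + u) -> x * x <= (K * r) * (K * r) + 2 * K * s * x.
Proof.
  intros. assert (s <= u) by nra.
  assert (0 <= (K * (s + u) - x) * (x - K * (s - u))).
  { apply Rmult_le_pos; nra. }
  nra.
Qed.

Section S2.
Variables (n : nat) (s R' : R).
Hypotheses (hn : (2 <= n)%nat) (hs : 0 <= s) (hR : 0 < R').
Let N := INR n.
Let q := 1 + 1 / (N - 1).

Lemma N2 : 2 <= N.
Proof. unfold N. replace 2 with (INR 2) by (simpl; ring). apply le_INR; auto. Qed.

Lemma qN : q = N / (N - 1).
Proof. pose proof N2. unfold q. field. lra. Qed.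

Lemma q1 : 1 < q /\ q <= 2.
Proof. pose proof N2. rewrite qN. split.
  apply (Rmult_lt_reg_r (N-1)); [lra|]. unfold Rdiv; rewrite Rmult_assoc, Rinv_l; lra.
  apply (Rmult_le_reg_r (N-1)); [lra|]. unfold Rdiv; rewrite Rmult_assoc, Rinv_l; lra.
Qed.

Lemma pos k : seq_A n s R' k >= 0 /\ 2 * R' * seq_a n s R' (S k) >= Rmin (q ^ k) N.
Proof.
  pose proof N2. pose proof q1.
  induction k as [|k [IH1 IH2]].
  - split. unfold seq_A; simpl; lra.
    rewrite a_1. simpl. unfold N. pose proof (Rmin_r 1 N). unfold N in *.
    replace (2 * R' * (INR n / (2 * R'))) with (INR n) by (field; lra). lra.
  - assert (HA : seq_A n s R' (S k) >= 0).
    { rewrite A_S. assert (0 < Rmin (q ^ k) N).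
      { apply Rmin_glb_lt. apply pow_lt; lra. lra. }
      assert (0 < seq_a n s R' (S k)).
      { apply (Rmult_lt_reg_l (2 * R')). lra. lra. }
      lra. }
    split; auto.
    destruct k as [|k].
    + rewrite a_2, a_1. simpl. rewrite Rmult_1_r.
      replace (2 * R' * (INR n / (2 * R') / (INR n - 1))) with q.
      apply Rle_ge, Rmin_l. rewrite qN. unfold N in *. field. split; lra.
    + rewrite a_SSS. fold N. fold q.
      assert (Hm : Rmin (q ^ S (S k)) N <= q * Rmin (q ^ S k) N).
      { unfold Rmin at 2. destruct (Rle_dec (q ^ S k) N).
        apply Rmin_l. eapply Rle_trans. apply Rmin_r. nra. }
      assert (Hs : N <= sqrt (N * (N + s * seq_A n s R' (S (S k))))).
      { apply sqrt_ge. lra. assert (0 <= s * seq_A n s R' (S (S k))) by nra. nra. }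
      apply Rle_ge. unfold Rmin at 2. destruct (Rle_dec _ _).
      * apply Rle_trans with (q * (2 * R' * seq_a n s R' (S (S k)))). nra.
        right; field; lra.
      * apply Rle_trans with N. apply Rmin_r.
        apply Rle_trans with (sqrt (N * (N + s * seq_A n s R' (S (S k))))). auto.
        right; field; lra.
Qed.

Let B := Bconst n s R'.
Let K := N * (N - 1) / (4 * R').
Let r := 4 * R' / (N - 1).
Let u := sqrt (s ^ 2 + r ^ 2).

Lemma Bfacts : B = K * (s + u) /\ K * r = N /\ 0 < K /\ 0 < r /\ u * u = s * s + r * r /\ 0 <= u.
Proof.
  pose proof N2. assert (0 < r) by (unfold r; apply Rdiv_lt_0_compat; lra).
  assert (0 < K) by (unfold K; apply Rdiv_lt_0_compat; nra).
  repeat split; auto.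
  - unfold K, r. field. lra.
  - unfold u. rewrite sqrt_sqrt. ring. nra.
  - apply sqrt_pos.
Qed.

Lemma Bge : B >= N * Rmax 1 (s * (N - 1) / (2 * R')).
Proof.
  pose proof N2. destruct Bfacts as (E & E1 & E2 & E3 & E4 & E5). rewrite E.
  assert (s <= u) by nra. assert (r <= u) by nra.
  apply Rle_ge. unfold Rmax. destruct (Rle_dec _ _).
  - replace (N * (s * (N - 1) / (2 * R'))) with (2 * K * s) by (unfold K; field; lra). nra.
  - nra.
Qed.

Lemma Bquad x : 0 <= x -> x <= B -> x * x <= N * (N + s * ((N - 1) * x / (2 * R'))).
Proof.
  intros. pose proof N2. destruct Bfacts as (E & E1 & E2 & E3 & E4 & E5). rewrite E in *.
  pose proof (quad K r s u x E2 E3 hs E4 E5 H H0). rewrite E1 in H2.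
  replace (N * (N + s * ((N - 1) * x / (2 * R')))) with (N * N + 2 * K * s * x).
  lra. unfold K. field. lra.
Qed.

Lemma geo j : q ^ j <= B ->
  2 * R' * seq_A n s R' (S j) >= (N - 1) * q ^ (S j) /\ 2 * R' * seq_a n s R' (S j) >= q ^ j.
Proof.
  pose proof N2. pose proof q1.
  induction j as [|j IH]; intros Hj.
  - rewrite A_1, a_1. fold N. simpl. rewrite qN.
    split. right; field; lra. replace (2 * R' * (N / (2 * R'))) with N by (field; lra). lra.
  - assert (q ^ j <= q ^ S j) by (apply Rle_pow; [lra|lia]).
    destruct (IH ltac:(lra)) as [IH1 IH2].
    assert (Ha : 2 * R' * seq_a n s R' (S (S j)) >= q ^ S j).
    { destruct j as [|j].
      - rewrite a_2, a_1. fold N. simpl. rewrite qN. right; field; lra.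
      - rewrite a_SSS. fold N. fold q. apply Rle_ge. unfold Rmin. destruct (Rle_dec _ _).
        + simpl in *. apply Rle_trans with (q * (2 * R' * seq_a n s R' (S (S j)))). nra.
          right; field; lra.
        + replace (2 * R' * (sqrt (N * (N + s * seq_A n s R' (S (S j)))) / (2 * R')))
            with (sqrt (N * (N + s * seq_A n s R' (S (S j))))) by (field; lra).
          apply sqrt_ge. left; apply pow_lt; lra.
          apply Rle_trans with (N * (N + s * ((N - 1) * q ^ S (S j) / (2 * R')))).
          apply Bquad; auto. left; apply pow_lt; lra.
          apply Rmult_le_compat_l. lra. apply Rplus_le_compat_l. apply Rmult_le_compat_l; auto.
          apply Rmult_le_reg_l with (2 * R'). lra.
          replace (2 * R' * ((N - 1) * q ^ S (S j) / (2 * R'))) with ((N - 1) * q ^ S (S j)) by (field; lra).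
          lra. }
    split; auto. rewrite A_S.
    replace ((N - 1) * q ^ S (S j)) with ((N - 1) * q ^ S j + q ^ S j).
    lra. simpl. rewrite qN. field. lra.
Qed.

Lemma lnq : ln N - ln (N - 1) = ln q.
Proof. pose proof N2. rewrite qN. unfold Rdiv. rewrite ln_mult, ln_Rinv; try lra.
  apply Rinv_0_lt_compat; lra. Qed.

Lemma Bpos : N <= B.
Proof. pose proof Bge. pose proof (Rmax_l 1 (s * (N - 1) / (2 * R'))). pose proof N2. nra. Qed.

Lemma Apos k : 0 <= seq_A n s R' k.
Proof. destruct (pos k); lra. Qed.

Lemma bound1 k : (1 <= k)%nat -> (Z.of_nat k <= k0 n s R')%Z ->
  (N - 1) / (2 * R') * q ^ k <= seq_A n s R' k.
Proof.
  intros Hk Hz. destruct k as [|j]; [lia|]. pose proof q1. pose proof N2. pose proof Bpos.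
  unfold k0 in Hz. fold N in Hz. rewrite lnq in Hz. fold B in Hz.
  pose proof (ceil_lt q B j ltac:(lra) ltac:(lra) Hz).
  destruct (geo j ltac:(lra)) as [G _].
  apply Rmult_le_reg_l with (2 * R'). lra.
  replace (2 * R' * ((N - 1) / (2 * R') * q ^ S j)) with ((N - 1) * q ^ S j) by (field; lra). lra.
Qed.

Lemma K0ge1 : (1 <= K0 n)%Z.
Proof. pose proof q1. pose proof N2. unfold K0. fold N. rewrite lnq. apply ceil_ge1; lra. Qed.

Lemma k0ge1 : (1 <= k0 n s R')%Z.
Proof. pose proof q1. pose proof N2. pose proof Bpos. unfold k0. fold N. rewrite lnq. fold B. apply ceil_ge1; lra. Qed.

Lemma preK0 j : (Z.of_nat (S j) <= K0 n)%Z -> 2 * R' * seq_A n s R' (S j) >= (N - 1) * q ^ S j.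
Proof.
  pose proof q1. pose proof N2.
  induction j as [|j IH]; intros Hz.
  - rewrite A_1. fold N. simpl. rewrite qN. right; field; lra.
  - rewrite A_S. specialize (IH ltac:(lia)).
    unfold K0 in Hz. fold N in Hz. rewrite lnq in Hz.
    pose proof (ceil_lt q N (S j) ltac:(lra) ltac:(lra) Hz).
    destruct (pos (S j)) as [_ P]. rewrite Rmin_left in P by lra.
    replace ((N - 1) * q ^ S (S j)) with ((N - 1) * q ^ S j + q ^ S j).
    lra. simpl. rewrite qN. field. lra.
Qed.

Lemma postK0 i : 2 * R' * seq_A n s R' (Z.to_nat (K0 n) + i) >= N * (INR i + N - 1).
Proof.
  pose proof q1. pose proof N2. pose proof K0ge1.
  assert (Hq : forall i, N <= q ^ (Z.to_nat (K0 n) + i)).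
  { intros i'. apply Rle_trans with (q ^ Z.to_nat (K0 n)).
    pose proof (ceil_ge q N (Z.to_nat (K0 n)) ltac:(lra) ltac:(lra)). unfold K0 in H2 at 1. fold N in H2. rewrite lnq in H2. apply H2. lia.
    apply Rle_pow; lia || lra. }
  induction i as [|i IH].
  - simpl. rewrite Nat.add_0_r. destruct (Z.to_nat (K0 n)) as [|j] eqn:E; [lia|].
    pose proof (preK0 j ltac:(lia)). specialize (Hq 0%nat). rewrite Nat.add_0_r in Hq.
    nra.
  - rewrite Nat.add_succ_r, A_S. destruct (pos (Z.to_nat (K0 n) + i)) as [_ P].
    rewrite Rmin_right in P by (apply Hq). rewrite S_INR. lra.
Qed.

Lemma bound3 k : (K0 n <= Z.of_nat k)%Z ->
  N * IZR (Z.of_nat k - K0 n + Z.of_nat n - 1) / (2 * R') <= seq_A n s R' k.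
Proof.
  intros Hz. pose proof K0ge1.
  replace k with (Z.to_nat (K0 n) + (k - Z.to_nat (K0 n)))%nat by lia.
  set (i := (k - Z.to_nat (K0 n))%nat).
  replace (Z.of_nat (Z.to_nat (K0 n) + i) - K0 n + Z.of_nat n - 1)%Z
    with (Z.of_nat i + Z.of_nat n - 1)%Z by lia.
  rewrite minus_IZR, plus_IZR, <- !INR_IZR_INZ. fold N.
  pose proof (postK0 i). apply Rmult_le_reg_l with (2 * R'). lra.
  replace (2 * R' * (N * (INR i + N - 1) / (2 * R'))) with (N * (INR i + N - 1)) by (field; lra).
  lra.
Qed.

Lemma k0_eq : k0 n s R' = Rceil (ln B / ln q).
Proof. unfold k0. fold N. rewrite lnq. reflexivity. Qed.

Lemma alg1 W m : 2 <= N -> 0 <= W -> N - 1 <= m -> W * (N - 1) ^ 2 / N * (m + 1) <= W * (N - 1) * m.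
Proof.
  intros. apply Rmult_le_reg_l with N. lra.
  replace (N * (W * (N - 1) ^ 2 / N * (m + 1))) with (W * (N - 1) * ((N - 1) * (m + 1))) by (field; lra).
  assert (0 <= W * (N - 1)) by nra. nra.
Qed.

Lemma alg2 W m : 2 <= N -> 0 <= W -> N - 1 <= m -> W * (N - 1) ^ 2 / (2 * N) * (2 * m + 1) <= W * (N - 1) * m.
Proof.
  intros. apply Rmult_le_reg_l with (2 * N). lra.
  replace (2 * N * (W * (N - 1) ^ 2 / (2 * N) * (2 * m + 1))) with (W * (N - 1) * ((N - 1) * (2 * m + 1))) by (field; lra).
  assert (0 <= W * (N - 1)) by nra. nra.
Qed.

Lemma post_k0 (Hs : 0 < s) :
  let W := s / (8 * R' ^ 2) in
  forall i, let m := INR i + N - 1 in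
  W * (N - 1) ^ 2 / (2 * N) * m ^ 2 <= seq_A n s R' (Z.to_nat (k0 n s R') + i) /\ W * (N - 1) ^ 2 / N * m <= seq_a n s R' (Z.to_nat (k0 n s R') + i).
Proof.
  intros W. pose proof q1. pose proof N2. pose proof Bpos. pose proof k0ge1.
  assert (HW : 0 < W) by (unfold W; apply Rdiv_lt_0_compat; nra).
  assert (HBN : N < B).
  { destruct Bfacts as (E & E1 & E2 & E3 & E4 & E5). rewrite E. assert (r <= u) by nra. nra. }
  assert (Hk0 : (2 <= k0 n s R')%Z).
  { destruct (Z.le_gt_cases 2 (k0 n s R')); auto.
    pose proof (ceil_ge q B 1 ltac:(lra) ltac:(lra)).
    assert (B <= q ^ 1) by (apply H4; rewrite <- k0_eq; simpl; lia). simpl in H5. lra. }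
  assert (HBs : 4 * R' * W * N * (N - 1) <= B).
  { pose proof Bge. pose proof (Rmax_r 1 (s * (N - 1) / (2 * R'))).
    replace (4 * R' * W * N * (N - 1)) with (N * (s * (N - 1) / (2 * R'))) by (unfold W; field; lra).
    nra. }
  induction i as [|i IH]; intros m.
  - unfold m; simpl INR. rewrite Nat.add_0_r.
    destruct (Z.to_nat (k0 n s R')) as [|p] eqn:E; [lia|].
    assert (Hz : (Z.of_nat (S p) <= k0 n s R')%Z) by lia.
    unfold k0 in Hz. fold N in Hz. rewrite lnq in Hz. fold B in Hz.
    pose proof (ceil_lt q B p ltac:(lra) ltac:(lra) Hz).
    assert (Hz2 : (k0 n s R' <= Z.of_nat (S p))%Z) by lia.
    unfold k0 in Hz2. fold N in Hz2. rewrite lnq in Hz2. fold B in Hz2.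
    pose proof (ceil_ge q B (S p) ltac:(lra) ltac:(lra) Hz2).
    destruct (geo p ltac:(lra)) as [G1 G2].
    assert (Hqp : q ^ S p = N / (N - 1) * q ^ p) by (simpl; rewrite qN; ring).
    assert (HA : 2 * W * N * (N - 1) ^ 2 <= seq_A n s R' (S p)).
    { apply Rmult_le_reg_l with (2 * R'). lra. nra. }
    assert (Hqp2 : 4 * R' * W * (N - 1) ^ 2 <= q ^ p).
    { apply Rmult_le_reg_l with (N / (N - 1)). apply Rdiv_lt_0_compat; lra.
      replace (N / (N - 1) * (4 * R' * W * (N - 1) ^ 2)) with (4 * R' * W * N * (N - 1)) by (field; lra).
      lra. }
    assert (Ha : 2 * W * (N - 1) ^ 2 <= seq_a n s R' (S p)).
    { apply Rmult_le_reg_l with (2 * R'). lra. nra. }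
    split.
    + eapply Rle_trans; [|apply HA].
      apply Rmult_le_reg_l with (2 * N). lra.
      replace (2 * N * (W * (N - 1) ^ 2 / (2 * N) * (0 + N - 1) ^ 2)) with (W * (N - 1) ^ 2 * (N - 1) ^ 2) by (field; lra).
      assert ((N - 1) ^ 2 <= 4 * N * N) by nra. assert (0 <= W * (N - 1) ^ 2) by (apply Rmult_le_pos; [lra | apply pow_le; lra]).
      replace (2 * N * (2 * W * N * (N - 1) ^ 2)) with (W * (N - 1) ^ 2 * (4 * N * N)) by ring.
      apply Rmult_le_compat_l; auto.
    + eapply Rle_trans; [|apply Ha].
      apply Rmult_le_reg_l with N. lra.
      replace (N * (W * (N - 1) ^ 2 / N * (0 + N - 1))) with (W * (N - 1) ^ 2 * (N - 1)) by (field; lra).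
      assert (0 <= W * (N - 1) ^ 2) by (apply Rmult_le_pos; [lra | apply pow_le; lra]). nra.
  - destruct IH as [IH1 IH2]. fold m in IH1, IH2.
    set (m0 := INR i + N - 1) in *.
    assert (Hm0 : N - 1 <= m0) by (unfold m0; pose proof (pos_INR i); lra).
    assert (Hm : m = m0 + 1) by (unfold m, m0; rewrite S_INR; ring).
    assert (HV : W * (N - 1) * m0 <= seq_a n s R' (Z.to_nat (k0 n s R') + S i)).
    { rewrite Nat.add_succ_r.
      replace (Z.to_nat (k0 n s R') + i)%nat with (S (S (Z.to_nat (k0 n s R') + i - 2))) by lia.
      rewrite a_SSS. fold N q.
      replace (S (S (Z.to_nat (k0 n s R') + i - 2))) with (Z.to_nat (k0 n s R') + i)%nat by lia.
      apply Rmin_glb.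
      - rewrite qN. apply Rle_trans with (N / (N - 1) * (W * (N - 1) ^ 2 / N * m0)).
        right; field; lra. apply Rmult_le_compat_l; auto. left; apply Rdiv_lt_0_compat; lra.
      - apply Rmult_le_reg_l with (2 * R'). lra.
        replace (2 * R' * (sqrt (N * (N + s * seq_A n s R' (Z.to_nat (k0 n s R') + i))) / (2 * R')))
          with (sqrt (N * (N + s * seq_A n s R' (Z.to_nat (k0 n s R') + i)))) by (field; lra).
        apply sqrt_ge. apply Rmult_le_pos; [lra|]; apply Rmult_le_pos; [apply Rmult_le_pos|]; lra.
        assert (Hsw : s = 8 * R' ^ 2 * W) by (unfold W; field; lra).
        assert (0 <= N * N) by nra.
        assert (N * s * (W * (N - 1) ^ 2 / (2 * N) * m0 ^ 2) = 2 * R' * (W * (N - 1) * m0) * (2 * R' * (W * (N - 1) * m0))).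
        { rewrite Hsw. field. lra. }
        assert (N * s * (W * (N - 1) ^ 2 / (2 * N) * m0 ^ 2) <= N * s * seq_A n s R' (Z.to_nat (k0 n s R') + i)).
        { apply Rmult_le_compat_l; auto. nra. }
        nra. }
    pose proof (alg1 W m0 ltac:(lra) ltac:(lra) Hm0).
    pose proof (alg2 W m0 ltac:(lra) ltac:(lra) Hm0).
    split.
    + rewrite Nat.add_succ_r, A_S, <- Nat.add_succ_r. rewrite Hm.
      replace (W * (N - 1) ^ 2 / (2 * N) * (m0 + 1) ^ 2) with
        (W * (N - 1) ^ 2 / (2 * N) * m0 ^ 2 + W * (N - 1) ^ 2 / (2 * N) * (2 * m0 + 1)) by (field; lra).
      lra.
    + rewrite Hm. lra.
Qed.

Lemma bound2 k : (k0 n s R' <= Z.of_nat k)%Z ->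
  (N - 1) ^ 2 * s / ((4 * R') ^ 2 * N) * IZR (Z.of_nat k - k0 n s R' + Z.of_nat n - 1) ^ 2
    <= seq_A n s R' k.
Proof.
  intros Hz. pose proof N2. pose proof (Apos k).
  destruct (Rle_lt_or_eq_dec 0 s hs) as [Hs|Hs].
  2:{ assert (Hs0 : s = 0) by auto.
       replace ((N - 1) ^ 2 * s / ((4 * R') ^ 2 * N)) with 0. lra.
       rewrite Hs0. rewrite Rmult_0_r. unfold Rdiv. rewrite !Rmult_0_l. reflexivity. }
  pose proof k0ge1.
  replace k with (Z.to_nat (k0 n s R') + (k - Z.to_nat (k0 n s R')))%nat by lia.
  set (i := (k - Z.to_nat (k0 n s R'))%nat).
  replace (Z.of_nat (Z.to_nat (k0 n s R') + i) - k0 n s R' + Z.of_nat n - 1)%Z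
    with (Z.of_nat i + Z.of_nat n - 1)%Z by lia.
  rewrite minus_IZR, plus_IZR, <- !INR_IZR_INZ. fold N.
  destruct (post_k0 Hs i) as [P _].
  eapply Rle_trans; [|apply P]. right. field. lra.
Qed.

Lemma main :
  Bconst n s R' >= INR n * Rmax 1 (s * (INR n - 1) / (2 * R')) /\
  forall k : nat, (1 <= k)%nat ->
    seq_A n s R' k >=
      Rmax ((INR n - 1) / (2 * R') * (1 + 1 / (INR n - 1)) ^ k
              * indic (Z.leb (Z.of_nat k) (k0 n s R')))
        (Rmax ((INR n - 1) ^ 2 * s / ((4 * R') ^ 2 * INR n)
                 * (IZR (Z.of_nat k - k0 n s R' + Z.of_nat n - 1)) ^ 2
                 * indic (Z.leb (k0 n s R') (Z.of_nat k)))
              (INR n * IZR (Z.of_nat k - K0 n + Z.of_nat n - 1) / (2 * R')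
                 * indic (Z.leb (K0 n) (Z.of_nat k)))).
Proof.
  split. apply Bge.
  intros k hk. fold N q. pose proof (Apos k). apply Rle_ge.
  apply Rmax_lub; [|apply Rmax_lub]; unfold indic.
  - destruct (Z.leb_spec (Z.of_nat k) (k0 n s R')).
    + rewrite Rmult_1_r. apply bound1; auto.
    + rewrite Rmult_0_r. auto.
  - destruct (Z.leb_spec (k0 n s R') (Z.of_nat k)).
    + rewrite Rmult_1_r. apply bound2; auto.
    + rewrite Rmult_0_r. auto.
  - destruct (Z.leb_spec (K0 n) (Z.of_nat k)).
    + rewrite Rmult_1_r. apply bound3; auto.
    + rewrite Rmult_0_r. auto.
Qed.
End S2.

Theorem lemma7 (n : nat) (s R' : R) (hn : (2 <= n)%nat) (hs : 0 <= s) (hR : 0 < R') :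
  Bconst n s R' >= INR n * Rmax 1 (s * (INR n - 1) / (2 * R')) /\
  forall k : nat, (1 <= k)%nat ->
    seq_A n s R' k >=
      Rmax ((INR n - 1) / (2 * R') * (1 + 1 / (INR n - 1)) ^ k
              * indic (Z.leb (Z.of_nat k) (k0 n s R')))
        (Rmax ((INR n - 1) ^ 2 * s / ((4 * R') ^ 2 * INR n)
                 * (IZR (Z.of_nat k - k0 n s R' + Z.of_nat n - 1)) ^ 2
                 * indic (Z.leb (k0 n s R') (Z.of_nat k)))
              (INR n * IZR (Z.of_nat k - K0 n + Z.of_nat n - 1) / (2 * R')
                 * indic (Z.leb (K0 n) (Z.of_nat k)))).
Proof. apply main; auto. Qed.
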